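(* Let $H_1$ and $H_2$ be finite-dimensional Hilbert spaces and let $G\in L(H_1,H_2)$ with $\|G\|=1$ be a relative spear operator. Then $G$ is a partial isometry.
   Context: For a norm-one $G\in L(X,Y)$ and $T\in L(X,Y)$ ($X,Y$ Banach spaces, $S_X$ the unit sphere): $\|T\|_G := \inf_{\delta>0}\sup\{\|Tx\|: x\in S_X,\ \|Gx\|>1-\delta\}$; $V_G(T):=\bigcap_{\delta>0}\overline{\{y^*(Tx): x\in S_X,\ y^*\in S_{Y^*},\ \operatorname{Re} y^*(Gx)>1-\delta\}}$ and $\nu_G(T):=\max\{|\lambda|:\lambda\in V_G(T)\}$. $G$ is called a relative spear operator if $\nu_G(T)=\|T\|_G$ for all $T\in L(X,Y)$. A partial isometry is an operator $G$ with $G^*G$ an orthogonal projection. *)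

(* Defs.v *)
From HB Require Import structures.
From mathcomp Require Import all_boot all_order all_algebra.
From mathcomp Require Import boolp classical_sets reals.
From mathcomp Require Import complex.

Set Implicit Arguments.
Unset Strict Implicit.
Unset Printing Implicit Defensive.

Import Order.TTheory GRing.Theory Num.Theory.
Local Open Scope ring_scope.
Local Open Scope classical_set_scope.

(* Finite-dimensional Hilbert spaces over the scalar field K (K = R or K = R[i])
   are modelled as K^n = 'cV[K]_n with the standard inner product
   <x,y> = \sum_i conj(x_i) y_i.  Operators K^n -> K^m are matrices 'M[K]_(m,n)
   acting by x |-> T *m x.
   [re : K -> R] is the real part map (id for K = R, complex.Re for K = R[i]),
   so that [re `|z|] is the (real) modulus of the scalar z.
   [conj : K -> K] is complex conjugation (id for K = R). *)

Section RelSpear.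
Variables (R : realType) (K : numFieldType) (re : K -> R) (conj : K -> K).

Definition kabs (z : K) : R := re `|z|.

Definition hnorm n (x : 'cV[K]_n) : R := Num.sqrt (\sum_i (kabs (x i 0)) ^+ 2).

Definition hsphere n : set 'cV[K]_n := [set x | hnorm x = 1].

Definition opnorm m n (T : 'M[K]_(m, n)) : R :=
  sup [set hnorm (T *m x) | x in @hsphere n].

(* the dual of K^m : linear functionals y |-> f *m y, f a row vector,
   with the dual (operator) norm *)
Definition dnorm m (f : 'rV[K]_m) : R :=
  sup [set kabs ((f *m y) 0 0) | y in @hsphere m].

Definition dsphere m : set 'rV[K]_m := [set f | dnorm f = 1].

Definition relnorm m n (G T : 'M[K]_(m, n)) : R :=
  inf [set s | exists2 d : R, 0 < d &
         s = sup [set hnorm (T *m x) |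
                   x in [set x | @hsphere n x /\ 1 - d < hnorm (G *m x)]]].

Definition numrange_approx m n (G T : 'M[K]_(m, n)) (d : R) : set K :=
  [set z | exists x, exists f, [/\ @hsphere n x, @dsphere m f,
              1 - d < re ((f *m (G *m x)) 0 0) & z = (f *m (T *m x)) 0 0]].

Definition kclosure (A : set K) : set K :=
  [set l | forall e : R, 0 < e -> exists2 a, A a & kabs (l - a) < e].

Definition numrange m n (G T : 'M[K]_(m, n)) : set K :=
  [set l | forall d : R, 0 < d -> kclosure (numrange_approx G T d) l].

(* nu_G(T) = max { |lambda| : lambda in V_G(T) } (written as a sup; V_G(T) is
   compact and nonempty here, so the sup is the max) *)
Definition numradius m n (G T : 'M[K]_(m, n)) : R :=
  sup [set kabs l | l in numrange G T].

Definition relative_spear m n (G : 'M[K]_(m, n)) : Prop :=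
  forall T : 'M[K]_(m, n), numradius G T = relnorm G T.

Definition adjoint m n (T : 'M[K]_(m, n)) : 'M[K]_(n, m) := (map_mx conj T)^T.

Definition orth_projection n (P : 'M[K]_n) : Prop :=
  P *m P = P /\ adjoint P = P.

Definition partial_isometry m n (G : 'M[K]_(m, n)) : Prop :=
  orth_projection (adjoint G *m G).

End RelSpear.

(* Main.v *)
Require Import Defs.
From HB Require Import structures.
From mathcomp Require Import all_boot all_order all_algebra.
From mathcomp Require Import boolp classical_sets reals.
From mathcomp Require Import complex.
From mathcomp Require Import ring lra.

Set Implicit Arguments.
Unset Strict Implicit.
Unset Printing Implicit Defensive.
Module H.
Import Order.TTheory GRing.Theory Num.Theory.
Local Open Scope ring_scope.
Local Open Scope classical_set_scope.

Lemma realCS (R : realFieldType) n (a b : 'I_n -> R) :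
  (\sum_i a i * b i) ^+ 2 <= (\sum_i a i ^+ 2) * (\sum_i b i ^+ 2).
Proof.
have E : \sum_i \sum_j (a i * b j - a j * b i) ^+ 2 =
   ((\sum_i a i ^+ 2) * (\sum_i b i ^+ 2)) *+ 2 - ((\sum_i a i * b i) ^+ 2) *+ 2.
  have E1 : \sum_i \sum_j (a i * b j - a j * b i) ^+ 2 =
     \sum_i \sum_j (a i ^+ 2 * b j ^+ 2) + \sum_i \sum_j (a j ^+2 * b i ^+ 2)
     - (\sum_i \sum_j (a i * b i) * (a j * b j)) *+ 2.
    rewrite (eq_bigr (fun i => \sum_j (a i ^+ 2 * b j ^+ 2 + a j ^+2 * b i ^+ 2
        - ((a i * b i) * (a j * b j)) *+ 2))); last first.
      by move=> i _; apply: eq_bigr => j _; rewrite sqrrB !exprMn; ring.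
    under eq_bigr do rewrite sumrB big_split /= sumrMnl.
    by rewrite sumrB big_split /= sumrMnl.
  rewrite E1 (exchange_big _ _ _ _ _ (fun i j => a j ^+ 2 * b i ^+ 2)) /=.
  have S1 : (\sum_i a i ^+ 2) * (\sum_i b i ^+ 2) = \sum_i \sum_j a i ^+ 2 * b j ^+ 2.
    by rewrite mulr_suml; apply: eq_bigr => i _; rewrite mulr_sumr.
  have S2 : (\sum_i a i * b i) ^+ 2 = \sum_i \sum_j a i * b i * (a j * b j).
    by rewrite expr2 mulr_suml; apply: eq_bigr => i _; rewrite mulr_sumr.
  by rewrite S1 S2 mulr2n.
have : 0 <= \sum_i \sum_j (a i * b j - a j * b i) ^+ 2.
  by apply: sumr_ge0 => i _; apply: sumr_ge0 => j _; apply: sqr_ge0.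
by rewrite E subr_ge0 lerMn2r.
Qed.

Section SupLemmas.
Variable R : realType.

Lemma sup1_has (S : set R) : sup S = 1 -> has_sup S.
Proof.
move=> h; case: (pselect (has_sup S)) => // /sup_out; rewrite h => /eqP.
by rewrite oner_eq0.
Qed.

Lemma sup1_ne (S : set R) : sup S = 1 -> S !=set0.
Proof. by move/sup1_has => []. Qed.

Lemma sup_le_mem (S : set R) y : has_sup S -> S y -> y <= sup S.
Proof. by move=> h Sy; apply: sup_upper_bound. Qed.

Lemma sup_all0 (S : set R) : (forall y, S y -> y = 0) -> sup S = 0.
Proof.
move=> h; case: (pselect (S !=set0)) => [[y Sy]|ne].
  have -> : S = [set 0]; last exact: sup1.
  rewrite predeqE => z; split => [/h -> //|->].
  by have <- := h _ Sy.
have -> : S = set0; last exact: sup0.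
by rewrite predeqE => z; split => // Sz; apply: ne; exists z.
Qed.

Lemma sup_ge0 (S : set R) : (forall y, S y -> 0 <= y) -> 0 <= sup S.
Proof.
move=> h; case: (pselect (has_sup S)) => [hs|/sup_out -> //].
by case: (hs) => [[y Sy] _]; apply: le_trans (h _ Sy) (sup_le_mem hs Sy).
Qed.

End SupLemmas.

Section Gen.
Variables (R : realType) (K : numFieldType) (re : K -> R) (conj : K -> K)
  (emb : R -> K).
Hypothesis conjD : forall a b : K, conj (a + b) = conj a + conj b.
Hypothesis conjM : forall a b : K, conj (a * b) = conj a * conj b.
Hypothesis conjN : forall a : K, conj (- a) = - conj a.
Hypothesis conj0 : conj 0 = 0.
Hypothesis conj1 : conj 1 = 1.
Hypothesis conjK : forall a : K, conj (conj a) = a.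
Hypothesis conj_emb : forall r : R, conj (emb r) = emb r.
Hypothesis conj_norm : forall a : K, conj a * a = `|a| ^+ 2.
Hypothesis norm_conj : forall a : K, `|conj a| = `|a|.
Hypothesis reD : forall a b : K, re (a + b) = re a + re b.
Hypothesis reN : forall a : K, re (- a) = - re a.
Hypothesis re_conj : forall a : K, re (conj a) = re a.
Hypothesis re_emb : forall r : R, re (emb r) = r.
Hypothesis norm_re : forall a : K, `|a| = emb (re `|a|).
Hypothesis embD : forall r s : R, emb (r + s) = emb r + emb s.
Hypothesis embM : forall r s : R, emb (r * s) = emb r * emb s.
Hypothesis emb0 : emb 0 = 0.
Hypothesis emb1 : emb 1 = 1.
Hypothesis emb_le : forall r s : R, (emb r <= emb s) = (r <= s).
Hypothesis re_le : forall a : K, re a <= re `|a|.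
Hypothesis norm_emb : forall r : R, `|emb r| = emb `|r|.

Local Notation ka := (kabs re).
Local Notation hn := (hnorm re).
Local Notation adj := (adjoint conj).

Lemma normE a : `|a| = emb (ka a). Proof. exact: norm_re. Qed.

Lemma ka_ge0 a : 0 <= ka a.
Proof. by rewrite -emb_le emb0 -normE. Qed.

Lemma kaM a b : ka (a * b) = ka a * ka b.
Proof. by rewrite {1}/kabs normrM (normE a) (normE b) -embM re_emb. Qed.

Lemma kaD a b : ka (a + b) <= ka a + ka b.
Proof. by rewrite -emb_le embD -!normE ler_normD. Qed.

Lemma ka0 : ka 0 = 0.
Proof. by rewrite /kabs normr0 -emb0 re_emb. Qed.

Lemma kaN a : ka (- a) = ka a.
Proof. by rewrite /kabs normrN. Qed.

Lemma ka_eq0 a : ka a = 0 -> a = 0.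
Proof. by move=> h; apply/normr0_eq0; rewrite normE h emb0. Qed.

Lemma ka_conj a : ka (conj a) = ka a.
Proof. by rewrite /kabs norm_conj. Qed.

Lemma ka_emb r : ka (emb r) = `|r|.
Proof. by rewrite /kabs norm_emb re_emb. Qed.

Lemma re_le_ka a : re a <= ka a.
Proof. exact: re_le. Qed.

Lemma conj_normE a : conj a * a = emb (ka a ^+ 2).
Proof. by rewrite conj_norm normE !expr2 embM. Qed.

Lemma embB r s : emb (r - s) = emb r - emb s.
Proof.
have : emb (r - s) + emb s = emb r by rewrite -embD subrK.
by move=> <-; rewrite addrK.
Qed.

Lemma emb_sum I (s : seq I) (P : pred I) (F : I -> R) :
  emb (\sum_(i <- s | P i) F i) = \sum_(i <- s | P i) emb (F i).
Proof. exact: (big_morph emb embD emb0). Qed.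

Lemma conj_sum I (s : seq I) (P : pred I) (F : I -> K) :
  conj (\sum_(i <- s | P i) F i) = \sum_(i <- s | P i) conj (F i).
Proof. exact: (big_morph conj conjD conj0). Qed.

Lemma re0 : re 0 = 0.
Proof. by rewrite -emb0 re_emb. Qed.

Lemma re_sum I (s : seq I) (P : pred I) (F : I -> K) :
  re (\sum_(i <- s | P i) F i) = \sum_(i <- s | P i) re (F i).
Proof. exact: (big_morph re reD re0). Qed.

Lemma reB a b : re (a - b) = re a - re b.
Proof. by rewrite reD reN. Qed.

Lemma ka_sum I (s : seq I) (P : pred I) (F : I -> K) :
  ka (\sum_(i <- s | P i) F i) <= \sum_(i <- s | P i) ka (F i).
Proof.
elim/big_rec2: _ => [|i y x _ h]; first by rewrite ka0.
by apply: le_trans (kaD _ _) _; rewrite lerD2l.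
Qed.


Definition ip n (x y : 'cV[K]_n) : K := \sum_i conj (x i 0) * y i 0.

Lemma hn2 n (x : 'cV[K]_n) : hn x ^+ 2 = \sum_i ka (x i 0) ^+ 2.
Proof. by rewrite /hnorm sqr_sqrtr // sumr_ge0 // => i _; apply: sqr_ge0. Qed.

Lemma hn_ge0 n (x : 'cV[K]_n) : 0 <= hn x.
Proof. exact: sqrtr_ge0. Qed.

Lemma ip_self n (x : 'cV[K]_n) : ip x x = emb (hn x ^+ 2).
Proof. by rewrite hn2 emb_sum; apply: eq_bigr => i _; rewrite conj_normE. Qed.

Lemma re_ip_self n (x : 'cV[K]_n) : re (ip x x) = hn x ^+ 2.
Proof. by rewrite ip_self re_emb. Qed.

Lemma adjE m n (M : 'M[K]_(m, n)) i j : adj M i j = conj (M j i).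
Proof. by rewrite /adjoint !mxE. Qed.

Lemma ip_mulE n (f : 'rV[K]_n) (y : 'cV[K]_n) : (f *m y) 0 0 = ip (adj f) y.
Proof. by rewrite mxE; apply: eq_bigr => i _; rewrite adjE conjK. Qed.

Lemma adjK m n (M : 'M[K]_(m, n)) : adj (adj M) = M.
Proof. by apply/matrixP => i j; rewrite !adjE conjK. Qed.

Lemma adj_mul m n p (A : 'M[K]_(m, n)) (B : 'M[K]_(n, p)) :
  adj (A *m B) = adj B *m adj A.
Proof.
apply/matrixP => i j; rewrite adjE !mxE conj_sum; apply: eq_bigr => k _.
by rewrite !adjE conjM mulrC.
Qed.

Lemma adjB m n (A B : 'M[K]_(m, n)) : adj (A - B) = adj A - adj B.
Proof. by apply/matrixP => i j; rewrite !mxE conjD conjN. Qed.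

Lemma adj1 n : adj (1%:M : 'M[K]_n) = 1%:M.
Proof.
apply/matrixP => i j; rewrite adjE !mxE eq_sym.
by case: (i == j); rewrite /= ?conj1 ?conj0.
Qed.

Lemma ip_sym n (x y : 'cV[K]_n) : ip y x = conj (ip x y).
Proof.
rewrite /ip conj_sum; apply: eq_bigr => i _.
by rewrite conjM conjK mulrC.
Qed.

Lemma ipDr n (x y z : 'cV[K]_n) : ip x (y + z) = ip x y + ip x z.
Proof. by rewrite /ip -big_split; apply: eq_bigr => i _; rewrite mxE mulrDr. Qed.

Lemma ipNr n (x y : 'cV[K]_n) : ip x (- y) = - ip x y.
Proof. by rewrite /ip -sumrN; apply: eq_bigr => i _; rewrite mxE mulrN. Qed.

Lemma ipBr n (x y z : 'cV[K]_n) : ip x (y - z) = ip x y - ip x z.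
Proof. by rewrite ipDr ipNr. Qed.

Lemma ipBl n (x y z : 'cV[K]_n) : ip (x - y) z = ip x z - ip y z.
Proof. by rewrite ip_sym ipBr conjD conjN -!ip_sym. Qed.

Lemma ipZr n a (x y : 'cV[K]_n) : ip x (a *: y) = a * ip x y.
Proof.
rewrite /ip mulr_sumr; apply: eq_bigr => i _; rewrite mxE.
by rewrite mulrCA.
Qed.

Lemma ip_mxl m n (M : 'M[K]_(m, n)) (x : 'cV[K]_n) (y : 'cV[K]_m) :
  ip (M *m x) y = ip x (adj M *m y).
Proof.
rewrite /ip; under eq_bigr do rewrite mxE conj_sum mulr_suml.
rewrite exchange_big /=; apply: eq_bigr => j _.
rewrite mxE mulr_sumr; apply: eq_bigr => i _.
by rewrite adjE conjM; ring.
Qed.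

Lemma ka_entry n (x : 'cV[K]_n) i : ka (x i 0) <= hn x.
Proof.
rewrite -(ger0_norm (ka_ge0 (x i 0))) -sqrtr_sqr /hnorm ler_wsqrtr //.
rewrite (bigD1 i) //= lerDl; apply: sumr_ge0 => j _; apply: sqr_ge0.
Qed.

Lemma CS n (x y : 'cV[K]_n) : ka (ip x y) <= hn x * hn y.
Proof.
apply: le_trans (ka_sum _ _ _) _.
under eq_bigr do rewrite kaM ka_conj.
have h0 : 0 <= \sum_i ka (x i 0) * ka (y i 0).
  by apply: sumr_ge0 => i _; rewrite mulr_ge0 // ka_ge0.
rewrite -(ger0_norm h0) -sqrtr_sqr /hnorm -sqrtrM; last first.
  by apply: sumr_ge0 => i _; apply: sqr_ge0.
by rewrite ler_wsqrtr // realCS.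
Qed.

Lemma hnZ n a (x : 'cV[K]_n) : hn (a *: x) = ka a * hn x.
Proof.
rewrite /hnorm -(ger0_norm (ka_ge0 a)) -sqrtr_sqr -sqrtrM ?sqr_ge0 //.
rewrite mulr_sumr; congr Num.sqrt; apply: eq_bigr => i _.
by rewrite mxE kaM exprMn.
Qed.

Lemma hn_eq0 n (x : 'cV[K]_n) : hn x = 0 -> x = 0.
Proof.
move=> h; apply/matrixP => i j; rewrite (ord1 j) mxE.
by apply: ka_eq0; apply/eqP; rewrite eq_le ka_ge0 -h ka_entry.
Qed.

Lemma hn0 n : hn (0 : 'cV[K]_n) = 0.
Proof.
by rewrite /hnorm big1 ?sqrtr0 // => i _; rewrite mxE ka0 expr0n.
Qed.

Lemma hn_subsq n (x y : 'cV[K]_n) :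
  hn (x - y) ^+ 2 = hn x ^+ 2 + hn y ^+ 2 - (re (ip x y)) *+ 2.
Proof.
rewrite -!re_ip_self ipBl !ipBr (ip_sym y x) !reB re_conj.
by rewrite mulr2n; lra.
Qed.


Section Op.
Variables (m n : nat) (G : 'M[K]_(m, n)).
Hypothesis opG : opnorm re G = 1.

Lemma op_has_sup : has_sup [set hn (G *m x) | x in hsphere re (n:=n)].
Proof. exact: sup1_has. Qed.

Lemma unit_vec (x : 'cV[K]_n) : hn x != 0 -> hn (emb (hn x)^-1 *: x) = 1.
Proof.
move=> h; rewrite hnZ ka_emb ger0_norm ?invr_ge0 ?hn_ge0 //.
by rewrite mulVf.
Qed.

Lemma G_le x : hn (G *m x) <= hn x.
Proof.
have [h|h] := eqVneq (hn x) 0.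
  by rewrite (hn_eq0 h) mulmx0 !hn0.
have := sup_le_mem op_has_sup (ex_intro2 _ _ _ (unit_vec h) erefl).
have e := opG; rewrite /opnorm in e; rewrite e -scalemxAr hnZ ka_emb.
have hp : 0 < hn x by rewrite lt_def h hn_ge0.
by rewrite ger0_norm ?invr_ge0 ?hn_ge0 // mulrC ler_pdivrMr // mul1r.
Qed.

Lemma Gadj_le y : hn (adj G *m y) <= hn y.
Proof.
set h := hn (adj G *m y).
have h2 : h ^+ 2 <= hn y * h.
  rewrite /h -re_ip_self ip_mxl adjK.
  apply: le_trans (re_le_ka _) _; apply: le_trans (CS _ _) _.
  by rewrite ler_wpM2l ?hn_ge0 // G_le.
have h0 : 0 <= h := hn_ge0 _.
have hy : 0 <= hn y := hn_ge0 _.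
nra.
Qed.

Lemma oneA_bound x : hn x = 1 ->
  hn (x - (adj G *m G) *m x) ^+ 2 <= 1 - hn (G *m x) ^+ 2.
Proof.
move=> hx; rewrite hn_subsq hx -mulmxA -ip_mxl re_ip_self.
have := Gadj_le (G *m x); have := hn_ge0 (adj G *m (G *m x)).
have := hn_ge0 (G *m x).
set a := hn (adj G *m (G *m x)); set g := hn (G *m x).
move=> *; rewrite mulr2n; nra.
Qed.

End Op.

Lemma u_le m (f : 'rV[K]_m) : dnorm re f = 1 -> hn (adj f) <= 1.
Proof.
move=> hf; have hs := sup1_has hf.
have [h|h] := eqVneq (hn (adj f)) 0; first by rewrite h ler01.
have := sup_le_mem hs (ex_intro2 _ _ _ (unit_vec h) erefl).
rewrite /dnorm in hf; rewrite hf ip_mulE ipZr ip_self -embM ka_emb.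
have hp : 0 < hn (adj f) by rewrite lt_def h hn_ge0.
rewrite ger0_norm; last by rewrite mulr_ge0 ?invr_ge0 ?hn_ge0 ?sqr_ge0.
by rewrite expr2 mulrA mulVf // mul1r.
Qed.



Section NumRad.
Variables (m n : nat) (G T : 'M[K]_(m, n)) (C : 'M[K]_n) (cT cC : R).
Hypothesis opG : opnorm re G = 1.
Hypothesis hGT : adj G *m T = (1%:M - adj G *m G) *m C.
Hypothesis cT0 : 0 <= cT.
Hypothesis cC0 : 0 <= cC.
Hypothesis hT : forall x, hn x = 1 -> hn (T *m x) <= cT.
Hypothesis hC : forall x, hn x = 1 -> hn (C *m x) <= cC.

Lemma sqrt_bound (y : R) d : 0 <= y -> y ^+ 2 <= d *+ 2 -> y <= Num.sqrt (d *+ 2).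
Proof.
by move=> y0 h; rewrite -(ger0_norm y0) -sqrtr_sqr ler_wsqrtr.
Qed.

Lemma approx_bound d x f : hn x = 1 -> dnorm re f = 1 ->
  1 - d < re ((f *m (G *m x)) 0 0) ->
  ka ((f *m (T *m x)) 0 0) <= Num.sqrt (d *+ 2) * (cT + cC).
Proof.
move=> hx hf hre; rewrite !ip_mulE in hre *.
set u := adj f in hre *; set g := G *m x in hre *.
have hu : hn u <= 1 := u_le hf.
have hg : hn g <= 1 by rewrite -hx G_le.
have hu0 := hn_ge0 u; have hg0 := hn_ge0 g.
have hre2 : re (ip u g) <= hn g.
  apply: le_trans (re_le_ka _) _; apply: le_trans (CS _ _) _.
  by rewrite -{2}(mul1r (hn g)) ler_wpM2r.
have hdist : hn (u - g) <= Num.sqrt (d *+ 2).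
  apply: sqrt_bound; first exact: hn_ge0.
  rewrite hn_subsq; rewrite !mulr2n; nra.
have hA : hn (x - adj G *m G *m x) <= Num.sqrt (d *+ 2).
  apply: sqrt_bound; first exact: hn_ge0.
  apply: le_trans (oneA_bound opG hx) _; rewrite -/g; rewrite mulr2n; nra.
have -> : ip u (T *m x) = ip (u - g) (T *m x) + ip g (T *m x).
  by rewrite ipBl subrK.
have -> : ip g (T *m x) = ip (x - adj G *m G *m x) (C *m x).
  have -> : x - adj G *m G *m x = adj (1%:M - adj G *m G) *m x.
    by rewrite adjB adj1 adj_mul adjK mulmxBl mul1mx.
  by rewrite [in RHS]ip_mxl adjK /g ip_mxl mulmxA hGT -mulmxA.
apply: le_trans (kaD _ _) _; rewrite mulrDr.
have hs0 := sqrtr_ge0 (d *+ 2).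
apply: lerD; apply: le_trans (CS _ _) _; apply: ler_pM => //; try exact: hn_ge0.
  exact: hT.
exact: hC.
Qed.

Lemma numradius0 : numradius re G T = 0.
Proof.
apply: sup_all0 => _ [l Hl <-].
apply/eqP; rewrite eq_le ka_ge0 andbT; apply/negP => /negP; rewrite -ltNge => lp.
set p := ka l in lp.
set c := cT + cC + 1.
have c0 : 0 < c by rewrite /c; move: cT0 cC0; lra.
set s := p / (c *+ 2).
have s0 : 0 < s by rewrite /s divr_gt0 // mulrn_wgt0.
set d := s ^+ 2 / 2.
have d0 : 0 < d by rewrite /d divr_gt0 // exprn_gt0.
have [a [x [f [hx hf hre ->]]] la] := Hl d d0 (p / 4) (divr_gt0 lp (ltr0Sn _ 3)).
have hb := approx_bound hx hf hre.
have e1 : Num.sqrt (d *+ 2) = s.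
  rewrite /d mulr2n -mulrDr -mulr2n (_ : (2^-1 : R) *+ 2 = 1); last first.
    by rewrite mulr2n -div1r -splitr.
  by rewrite mulr1 sqrtr_sqr gtr0_norm.
rewrite e1 in hb.
have hb2 : s * (cT + cC) <= p / 2.
  have -> : p / 2 = s * c.
    rewrite /s -mulr_natr; field.
    by rewrite gt_eqF.
  by rewrite ler_wpM2l ?ltW // /c; lra.
have : p <= ka ((f *m (T *m x)) 0 0) + ka (l - (f *m (T *m x)) 0 0).
  by rewrite /p; apply: le_trans (kaD _ _); rewrite addrC subrK.
lra.
Qed.

End NumRad.


Lemma rank1_mul p q (v : 'cV[K]_p) (i : 'I_q) (x : 'cV[K]_q) :
  (v *m delta_mx 0 i) *m x = x i 0 *: v.
Proof.
by rewrite -mulmxA -rowE [row i x]mx11_scalar mul_mx_scalar mxE.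
Qed.

Lemma rank1_bound p q (v : 'cV[K]_p) (i : 'I_q) (x : 'cV[K]_q) :
  hn x = 1 -> hn ((v *m delta_mx 0 i) *m x) <= hn v.
Proof.
move=> hx; rewrite rank1_mul hnZ -{2}(mul1r (hn v)) ler_wpM2r ?hn_ge0 //.
by rewrite -hx ka_entry.
Qed.

Lemma key2 (a : R) (k : nat) : 0 < a -> (a * (k%:R + 1)) ^+ 2 <= a ^+ 2 *+ k -> False.
Proof.
move=> a0; rewrite -[a ^+ 2 *+ k]mulr_natr; have := ler0n R k.
move: (k%:R : R) => N N0 h; nra.
Qed.

Section Final.
Variables (m n : nat) (G : 'M[K]_(m, n)).
Hypothesis opG : opnorm re G = 1.
Hypothesis spear : relative_spear re G.

Definition Ev (P : 'cV[K]_n -> Prop) :=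
  exists2 d : R, 0 < d & forall x, hn x = 1 -> 1 - d < hn (G *m x) -> P x.

Lemma Ev_and P Q : Ev P -> Ev Q -> Ev (fun x => P x /\ Q x).
Proof.
move=> [d1 d10 h1] [d2 d20 h2]; case: (leP d1 d2) => hd.
  exists d1 => // x hx hg; split; first exact: h1.
  by apply: h2 => //; apply: le_lt_trans hg; rewrite lerD2l lerN2.
exists d2 => // x hx hg; split; last exact: h2.
by apply: h1 => //; apply: le_lt_trans hg; rewrite lerD2l lerN2 ltW.
Qed.

Lemma Ev_all (I : eqType) (s : seq I) (P : I -> 'cV[K]_n -> Prop) :
  (forall i, Ev (P i)) -> Ev (fun x => forall i, i \in s -> P i x).
Proof.
move=> h; elim: s => [|a s [d d0 hd]].
  by exists 1 => // x _ _ i; rewrite in_nil.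
have [d' d'0 hd'] := Ev_and (h a) (ex_intro2 _ _ d d0 hd).
exists d' => // x hx hg i; rewrite in_cons => /orP [/eqP ->|iS].
  by case: (hd' x hx hg).
by case: (hd' x hx hg) => _; apply.
Qed.

Lemma near_exists d : 0 < d -> exists x, hn x = 1 /\ 1 - d < hn (G *m x).
Proof.
move=> d0; have ne := sup1_ne opG.
have lt1 : 1 - d < opnorm re G by rewrite opG; lra.
have [_ [x hx <-] lt] := sup_gt ne lt1.
by exists x.
Qed.

Lemma relnorm0_Ev T c : 0 <= c -> (forall x, hn x = 1 -> hn (T *m x) <= c) ->
  relnorm re G T = 0 -> forall e, 0 < e -> Ev (fun x => hn (T *m x) < e).
Proof.
move=> c0 hc hr e e0.
have ne : [set s | exists2 d : R, 0 < d &
         s = sup [set hnorm re (T *m x) |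
                   x in [set x | hsphere re x /\ 1 - d < hnorm re (G *m x)]]] !=set0.
  by eexists; exists 1 => //.
have lt1 : relnorm re G T < e by rewrite hr.
have [_ [d d0 ->] lt] := inf_lt ne lt1.
exists d => // x hx hg; apply: le_lt_trans lt.
apply: sup_le_mem; last by exists x.
split; first by exists (hn (T *m x)); exists x.
by exists c => _ [y [hy _] <-]; apply: hc.
Qed.

Lemma main_gen : partial_isometry conj G.
Proof.
have key : adj G *m (1%:M - G *m adj G) = (1%:M - adj G *m G) *m adj G.
  by rewrite mulmxBr mulmxBl mulmx1 mul1mx !mulmxA.
have Mz : forall z : 'cV[K]_n, (1%:M - G *m adj G) *m G *m z = 0.
  move=> z; set v := (1%:M - G *m adj G) *m G *m z.
  have hev : forall i, forall e, 0 < e ->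
      Ev (fun x => hn ((v *m delta_mx 0 i) *m x) < e).
    move=> i e e0; apply: (relnorm0_Ev (c := hn v)) => //.
    - exact: hn_ge0.
    - by move=> x hx; apply: rank1_bound.
    rewrite -spear.
    apply: (@numradius0 _ _ _ _ (adj G *m G *m z *m delta_mx 0 i) (hn v)
                        (hn (adj G *m G *m z))).
    - exact: opG.
    - by rewrite /v !mulmxA key.
    - exact: hn_ge0.
    - exact: hn_ge0.
    - by move=> x hx; apply: rank1_bound.
    - by move=> x hx; apply: rank1_bound.
  have hsq : forall e, 0 < e -> hn v ^+ 2 <= e ^+ 2 *+ n.
    move=> e e0.
    have [d d0 hd] := Ev_all (enum 'I_n) (fun i => hev i e e0).
    have [x [hx hg]] := near_exists d0.
    have hi := hd x hx hg.
    rewrite -[hn v ^+ 2]mulr1 -(expr1n _ 2) -hx (hn2 x) mulr_sumr.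
    have -> : e ^+ 2 *+ n = \sum_(i < n) e ^+ 2 by rewrite sumr_const card_ord.
    apply: ler_sum => i _.
    have := hi i (mem_enum _ i); rewrite rank1_mul hnZ.
    rewrite -exprMn => hlt.
    have p0 : 0 <= hn v * ka (x i 0) by rewrite mulr_ge0 ?ka_ge0 ?hn_ge0.
    by rewrite ler_sqr ?nnegrE ?(ltW e0) // mulrC ltW.
  apply/hn_eq0; apply/eqP; rewrite eq_le hn_ge0 andbT; apply/negP => /negP.
  rewrite -ltNge => hp.
  set e := hn v / (n.+1)%:R.
  have e0 : 0 < e by rewrite /e divr_gt0.
  have he : hn v = e * (n%:R + 1).
    by rewrite /e natr1 -mulrA mulVf ?mulr1 // pnatr_eq0.
  have := hsq e e0; rewrite {1}he; apply: key2 e0.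
have M0 : (1%:M - G *m adj G) *m G = 0.
  apply/matrixP => i j; have h := Mz (delta_mx j 0); rewrite -colE in h.
  by move/matrixP: h => /(_ i 0); rewrite !mxE.
have GG : G *m adj G *m G = G.
  by apply/eqP; rewrite eq_sym -subr_eq0 -[X in X - _]mul1mx -mulmxBl M0.
split; last by rewrite adj_mul adjK.
by rewrite -mulmxA (mulmxA G) GG.
Qed.

End Final.

End Gen.

End H.

Local Open Scope ring_scope.

Theorem theorem3p12 (R : realType) :
  (forall (n m : nat) (G : 'M[R]_(m, n)),
      opnorm (fun z : R => z) G = 1 ->
      relative_spear (fun z : R => z) G ->
      partial_isometry (fun z : R => z) G) /\
  (forall (n m : nat) (G : 'M[R[i]]_(m, n)),
      opnorm (@Re R) G = 1 ->
      relative_spear (@Re R) G ->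
      partial_isometry (@conjc R) G).
Proof.
split.
  move=> n m G hop hsp.
  apply: (H.main_gen (re := fun z : R => z) (conj := fun z : R => z) (emb := fun r : R => r)) => //.
  - by move=> a; rewrite Num.Theory.real_normK ?Num.Theory.num_real // GRing.expr2.
  - by move=> a; apply: Num.Theory.ler_norm.
move=> n m G hop hsp.
apply: (H.main_gen (re := @complex.Re R) (conj := @conjc R) (emb := fun r : R => (r%:C)%C)) => //.
- exact: GRing.rmorphD.
- exact: GRing.rmorphM.
- exact: GRing.rmorphN.
- exact: conjc0.
- exact: conjc1.
- exact: conjcK.
- by move=> a; rewrite sqr_normc GRing.mulrC.
- by case=> x y; rewrite !normc_def /= GRing.sqrrN.
- by case=> x1 y1 [x2 y2].
- by case.
- by case.
- exact: GRing.rmorphD.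
- exact: GRing.rmorphM.
- exact: lecR.
- case=> x y; rewrite normc_def /=.
  apply: Order.POrderTheory.le_trans (Num.Theory.ler_norm x) _.
  rewrite -Num.Theory.sqrtr_sqr Num.Theory.ler_wsqrtr //.
  by rewrite Num.Theory.lerDl Num.Theory.sqr_ge0.
- by move=> r; rewrite normc_def /= GRing.expr0n GRing.addr0 Num.Theory.sqrtr_sqr.
Qed.
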